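(* Let $K$ be a field, $I\subset R=K[x_1,\ldots,x_n]$ a monomial ideal and $W$ a weight over $R$. Then $I$ has the copersistence property if and only if the weighted ideal $I_W$ has the copersistence property.
   Context: An ideal $I$ in a commutative Noetherian ring $R$ has the copersistence property if $\mathrm{Ass}_R(R/I^k)\supseteq\mathrm{Ass}_R(R/I^{k+1})$ for all $k\ge1$. A weight over $R=K[x_1,\ldots,x_n]$ is a function $W:\{x_1,\ldots,x_n\}\to\mathbb{N}$ (positive integers); write $w_i=W(x_i)$. For a monomial ideal $I$, the weighted ideal $I_W$ is the ideal generated by $\{h(u): u \text{ a minimal monomial generator of } I\}$, where $h:R\to R$ is the $K$-algebra homomorphism with $h(x_i)=x_i^{w_i}$. *)

(* Defs.v *)
From HB Require Import structures.
From mathcomp Require Import all_boot all_order all_algebra.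
From mathcomp Require Import mpoly.
Set Implicit Arguments. Unset Strict Implicit. Unset Printing Implicit Defensive.
Import GRing.Theory.
Local Open Scope ring_scope.

Section Defs.
Variables (K : fieldType) (n : nat).
Local Notation R := {mpoly K[n]}.

Definition ideal_gen (S : R -> Prop) : R -> Prop :=
  fun p => exists r : seq (R * R),
    (forall x, x \in r -> S x.2) /\ p = \sum_(x <- r) x.1 * x.2.

Definition is_ideal (I : R -> Prop) : Prop :=
  I 0 /\ (forall a b, I a -> I b -> I (a + b)) /\ (forall a b, I b -> I (a * b)).

Definition is_prime_ideal (P : R -> Prop) : Prop :=
  is_ideal P /\ ~ P 1 /\ (forall a b, P (a * b) -> P a \/ P b).

Definition ideal_pow (I : R -> Prop) (k : nat) : R -> Prop :=
  ideal_gen (fun p => exists s : seq R,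
     size s = k /\ (forall q, q \in s -> I q) /\ p = \prod_(q <- s) q).

(* P is an associated prime of R/J: P is prime and P = (J : f) = Ann_R(f mod J). *)
Definition Ass (J : R -> Prop) (P : R -> Prop) : Prop :=
  is_prime_ideal P /\ exists f : R, forall g, P g <-> J (g * f).

Definition copersistent (I : R -> Prop) : Prop :=
  forall k : nat, (1 <= k)%N ->
    forall P, Ass (ideal_pow I k.+1) P -> Ass (ideal_pow I k) P.

Definition is_monomial (p : R) : Prop := exists m : 'X_{1..n}, p = 'X_[m].

Definition monomial_ideal (I : R -> Prop) : Prop :=
  forall p, I p <-> ideal_gen (fun q => I q /\ is_monomial q) p.

Definition min_mon_gen (I : R -> Prop) (m : 'X_{1..n}) : Prop :=
  I 'X_[m] /\
  forall m' : 'X_{1..n}, I 'X_[m'] -> (forall i, (m' i <= m i)%N) -> m' = m.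

Definition weight_hom (W : 'I_n -> nat) (p : R) : R :=
  comp_mpoly [tuple 'X_i ^+ W i | i < n] p.

Definition weighted_ideal (W : 'I_n -> nat) (I : R -> Prop) : R -> Prop :=
  ideal_gen (fun q => exists m, min_mon_gen I m /\ q = weight_hom W 'X_[m]).

End Defs.

(* Main.v *)
Require Import Defs.
From HB Require Import structures.
From mathcomp Require Import all_boot all_order all_algebra.
From mathcomp Require Import mpoly.
From Stdlib Require Import ClassicalEpsilon Classical.
From mathcomp Require Import zify.
Set Implicit Arguments. Unset Strict Implicit. Unset Printing Implicit Defensive.
Import GRing.Theory.
Local Open Scope ring_scope.

Definition dec (A : Prop) : bool :=
  if excluded_middle_informative A then true else false.
Lemma decP (A : Prop) : reflect A (dec A).
Proof. rewrite /dec; case: excluded_middle_informative => h; by constructor. Qed.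

Section Main.
Variables (K : fieldType) (n : nat).
Local Notation R := {mpoly K[n]}.
Local Notation mnm := ('X_{1..n}).

Definition idD (D : mnm -> Prop) (p : R) : Prop := forall m, m \in msupp p -> D m.
Definition upc (D : mnm -> Prop) : Prop := forall m m', (m <= m')%MM -> D m -> D m'.

Lemma idD0 D : idD D 0.
Proof. by move=> m; have /eqP -> : msupp (0 : R) == [::] by rewrite msupp_eq0. Qed.

Lemma idDX D m : idD D 'X_[m] <-> D m.
Proof. split; first by apply; rewrite msuppX mem_seq1.
by move=> Dm m'; rewrite msuppX mem_seq1 => /eqP ->. Qed.

Lemma idDD D p q : idD D p -> idD D q -> idD D (p + q).
Proof. by move=> hp hq m /msuppD_le; rewrite mem_cat => /orP [/hp|/hq]. Qed.

Lemma idDN D p : idD D p -> idD D (- p).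
Proof. by move=> hp m; rewrite (perm_mem (msuppN p)) => /hp. Qed.

Lemma idDB D p q : idD D p -> idD D q -> idD D (p - q).
Proof. by move=> hp hq; apply: idDD => //; apply: idDN. Qed.

Lemma idDM D p q : upc D -> idD D q -> idD D (p * q).
Proof.
move=> hD hq m /msuppM_le /allpairsP [[m1 m2] /= [_ h2 ->]].
by apply: (hD m2); [apply: lem_addl | apply: hq].
Qed.

Lemma idDZ D c p : idD D p -> idD D (c *: p).
Proof. by move=> hp m /msuppZ_le /hp. Qed.

Lemma idD_sum D (T : eqType) (r : seq T) (F : T -> R) :
  (forall x, x \in r -> idD D (F x)) -> idD D (\sum_(x <- r) F x).
Proof.
elim: r => [|x r IH] h; first by rewrite big_nil; apply: idD0.
rewrite big_cons; apply: idDD; first by apply: h; rewrite mem_head.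
by apply: IH => y hy; apply: h; rewrite in_cons hy orbT.
Qed.

Lemma idD_ideal D : upc D -> is_ideal (idD D).
Proof. move=> hD; split; first exact: idD0. split; first exact: idDD.
by move=> a b; apply: idDM. Qed.

Lemma idD_ext D E p : (forall m, D m <-> E m) -> idD D p <-> idD E p.
Proof. by move=> h; split => hp m /hp /h. Qed.

Lemma ideal_sub (P : R -> Prop) a b : is_ideal P -> P a -> P b -> P (a - b).
Proof.
case=> _ [hD hM] ha hb; apply: hD => //.
by rewrite -mulN1r; apply: hM.
Qed.

Lemma ideal_sum (P : R -> Prop) (T : eqType) (r : seq T) (F : T -> R) : is_ideal P ->
  (forall x, x \in r -> P (F x)) -> P (\sum_(x <- r) F x).
Proof.
case=> h0 [hD hM]; elim: r => [|x r IH] h; first by rewrite big_nil.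
rewrite big_cons; apply: hD; first by apply: h; rewrite mem_head.
by apply: IH => y hy; apply: h; rewrite in_cons hy orbT.
Qed.

Lemma ideal_mon (P : R -> Prop) p : is_ideal P -> (forall m, m \in msupp p -> P 'X_[m]) -> P p.
Proof.
move=> hP h; rewrite (mpolyE p); apply: ideal_sum => // m hm.
rewrite -mul_mpolyC; case: hP => _ [_ hM]; apply: hM; exact: h.
Qed.

Lemma gen_ideal (S : R -> Prop) : is_ideal (ideal_gen S).
Proof.
split; first by exists [::]; rewrite big_nil.
split.
  move=> a b [r1 [h1 ->]] [r2 [h2 ->]]; exists (r1 ++ r2); rewrite big_cat; split => //.
  by move=> x; rewrite mem_cat => /orP [/h1|/h2].
move=> a b [r [h ->]]; exists [seq (a * x.1, x.2) | x <- r]; split.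
  by move=> x /mapP [y /h hy ->].
by rewrite big_map mulr_sumr; apply: eq_bigr => x _; rewrite mulrA.
Qed.

Lemma gen_in (S : R -> Prop) a q : S q -> ideal_gen S (a * q).
Proof. by move=> h; exists [:: (a, q)]; rewrite big_seq1; split => // x; rewrite mem_seq1 => /eqP ->. Qed.

Lemma gen_sub (S J : R -> Prop) p : is_ideal J -> (forall q, S q -> J q) -> ideal_gen S p -> J p.
Proof.
move=> hJ hS [r [hr ->]]; apply: ideal_sum => // x hx.
by case: hJ => _ [_ hM]; apply: hM; apply: hS; apply: hr.
Qed.

Lemma gen_ext (S S' : R -> Prop) p : (forall q, S q <-> S' q) -> ideal_gen S p <-> ideal_gen S' p.
Proof. by move=> h; split => -[r [hr ->]]; exists r; split => // x /hr /h. Qed.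

Definition up (G : mnm -> Prop) : mnm -> Prop := fun c => exists2 m, G m & (m <= c)%MM.

Lemma up_upc G : upc (up G).
Proof. by move=> m m' hm [m0 h1 h2]; exists m0 => //; apply: lepm_trans hm. Qed.

Lemma gen_mon G p :
  ideal_gen (fun q => exists m, G m /\ q = 'X_[m]) p <-> idD (up G) p.
Proof.
split.
  apply: gen_sub; first exact/idD_ideal/up_upc.
  by move=> q [m [hm ->]]; apply/idDX; exists m => //; apply: lepm_refl.
move=> hp; rewrite (mpolyE p); apply: ideal_sum; first exact: gen_ideal.
move=> m /hp [m0 h1 h2].
rewrite -(submK h2) mpolyXD scalerAl.
by apply: gen_in; exists m0.
Qed.


Lemma mon_colon D g a : idD D (g * 'X_[a]) <-> idD (fun m => D (a + m)%MM) g.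
Proof.
have hp := perm_mem (msuppMX g a).
split => h m hm.
  by apply: h; rewrite hp; apply/mapP; exists m.
by move: hm; rewrite hp => /mapP [m' hm' ->]; apply: h.
Qed.

Lemma prime_no0 (P : R -> Prop) E : is_prime_ideal P -> (forall g, P g <-> idD E g) -> ~ E 0%MM.
Proof. by move=> [_ [h1 _]] hE h0; apply: h1; rewrite -mpolyX0; apply/hE/idDX. Qed.

Lemma prime_mon (P : R -> Prop) E : is_prime_ideal P -> (forall g, P g <-> idD E g) -> upc E ->
  forall m, E m <-> exists i, (0 < m i)%N /\ E U_(i)%MM.
Proof.
move=> hP hE hU m; split; last first.
  by move=> [i [hi hEi]]; apply: (hU U_(i)%MM) => //; rewrite lep1mP -lt0n.
have h0 := prime_no0 hP hE.
suff H : forall d m, (mdeg m <= d)%N -> E m -> exists i, (0 < m i)%N /\ E U_(i)%MM.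
  by move=> Em; apply: (H (mdeg m)).
elim=> [|d IH] {}m hm Em.
  by move: hm Em; rewrite leqn0 mdeg_eq0 => /eqP ->.
have [i hi] : exists i, m i != 0%N.
  apply: NNPP => hne; apply: h0; suff <- : m = 0%MM by [].
  apply/mnmP => i; rewrite mnm0E; apply/eqP; apply: NNPP => hi; apply: hne; exists i; exact/negP.
have hle : (U_(i) <= m)%MM by rewrite lep1mP.
set m' := (m - U_(i))%MM.
have hm' : m = (U_(i) + m')%MM by rewrite addmC submK.
have : P ('X_[U_(i)] * 'X_[m']) by rewrite -mpolyXD -hm'; apply/hE/idDX.
case: hP => _ [_ hpr] /hpr [/hE /idDX h1|/hE /idDX h2].
  by exists i; split => //; rewrite lt0n.
have hd : (mdeg m' <= d)%N by move: hm; rewrite hm' mdegD mdeg1.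
have [j [hj hEj]] := IH m' hd h2.
exists j; split => //; apply: leq_trans hj _; rewrite hm' mnmDE; exact: leq_addl.
Qed.

Definition red (E : mnm -> Prop) (f : R) : R :=
  \sum_(m <- msupp f | ~~ dec (E m)) f@_m *: 'X_[m].

Lemma red_diff E f : idD E (f - red E f).
Proof.
rewrite /red {1}(mpolyE f) (bigID (fun m => dec (E m))) /= addrK -big_filter.
apply: idD_sum => x; rewrite mem_filter => /andP [/decP hx _].
by apply: idDZ; apply/idDX.
Qed.

Lemma red_supp E f : perm_eq (msupp (red E f)) [seq m <- msupp f | ~~ dec (E m)].
Proof.
rewrite /red -big_filter; apply: msupp_sumX; first by rewrite filter_uniq // msupp_uniq.
by move=> m; rewrite mem_filter => /andP [_]; rewrite mcoeff_msupp.
Qed.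

Lemma red_mem E f m : m \in msupp (red E f) -> ~ E m.
Proof. by rewrite (perm_mem (red_supp E f)) mem_filter => /andP [/decP h _]. Qed.

Lemma colon_ext D f f' : upc D -> idD D (f - f') -> forall g, idD D (g * f) <-> idD D (g * f').
Proof.
move=> hD hd g; have e : g * f = g * f' + g * (f - f') by rewrite mulrBr addrC subrK.
split => h.
  have -> : g * f' = g * f - g * (f - f') by rewrite e addrK.
  by apply: idDB => //; apply: idDM.
by rewrite e; apply: idDD => //; apply: idDM.
Qed.

Lemma supp_nil0 (p : R) : msupp p = [::] -> p = 0.
Proof. by move=> h; apply/eqP; rewrite -msupp_eq0 h. Qed.

Lemma key_aux D (P : R -> Prop) : upc D -> is_prime_ideal P ->
  forall N f, (size (msupp f) <= N)%N -> (forall m, m \in msupp f -> ~ D m) ->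
  (forall g, P g <-> idD D (g * f)) -> exists a, forall g, P g <-> idD D (g * 'X_[a]).
Proof.
move=> hD hP; have hP' := hP; case: hP' => hI [h1 hpr].
have hId := hI; case: hId => _ [hadd hmul].
elim=> [|N IH] f hs hred hf.
  exfalso; apply: h1; apply/hf; rewrite mul1r.
  by move: hs; rewrite leqn0 size_eq0 => /eqP/supp_nil0 ->; apply: idD0.
have fn0 : f != 0.
  apply/eqP => f0; apply: h1; apply/hf; rewrite f0 mulr0; exact: idD0.
set l := mlead f.
have hl : l \in msupp f by apply: mlead_supp.
case: (classic (exists u, D (u + l)%MM /\ ~ P 'X_[u])) => [[u [hu hnP]]|hB].
  set f2 := red D (f * 'X_[u]).
  apply: (IH f2).
  - rewrite (perm_size (red_supp _ _)) size_filter.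
    rewrite (permP (msuppMX f u)) count_map.
    have := count_predC (preim (fun m' => (u + m')%MM) (fun m => ~~ dec (D m))) (msupp f).
    have : has (predC (preim (fun m' => (u + m')%MM) (fun m => ~~ dec (D m)))) (msupp f).
      apply/hasP; exists l => //=; rewrite negbK; exact/decP.
    rewrite has_count.
    move: (count _ (msupp f)) (count _ (msupp f)) => c1 c2.
    lia.
  - by move=> m /red_mem.
  - move=> g; split => h.
      apply: (proj1 (colon_ext hD (red_diff (E:=D) (f:=f * 'X_[u])) g)); rewrite [f * _]mulrC mulrA.
      by apply/hf; rewrite mulrC; apply: hmul.
    move: (proj2 (colon_ext hD (red_diff (E:=D) (f:=f * 'X_[u])) g) h); rewrite [f * _]mulrC mulrA => /hf /hpr.
    by case=> // /hnP.
have hB' : forall u, D (u + l)%MM -> P 'X_[u].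
  by move=> u hu; apply: NNPP => hn; apply: hB; exists u.
exists l => g; rewrite mon_colon.
have back : forall g, idD (fun m => D (l + m)%MM) g -> P g.
  move=> g' h; apply: ideal_mon => // m /h; rewrite addmC; exact: hB'.
split; last exact: back.
move=> hg; apply: NNPP => hng.
set E := (fun m => D (l + m)%MM) in hng back.
set g' := red E g.
have hg' : P g'.
  have -> : g' = g - (g - g') by rewrite opprB addrC subrK.
  by apply: ideal_sub => //; apply: back; apply: red_diff.
have [m0 hm0 hnm0] : exists2 m, m \in msupp g & ~ E m.
  apply: NNPP => hne; apply: hng => m hm; apply: NNPP => hnm; apply: hne; by exists m.
have g'n0 : g' != 0.
  apply/eqP => e.
  have : m0 \in msupp g' by rewrite (perm_mem (red_supp _ _)) mem_filter hm0 andbT; apply/decP.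
  by rewrite e; have /eqP -> : msupp (0 : R) == [::] by rewrite msupp_eq0.
have hgf : idD D (g' * f) by apply/hf.
set mu := mlead g'.
have hc : (g' * f)@_(mu + l)%MM != 0.
  by rewrite mleadcM mulf_neq0 // mleadc_eq0.
have := hgf _ (etrans (mcoeff_msupp _ _) hc).
have := red_mem (mlead_supp g'n0).
by rewrite /E addmC.
Qed.

Lemma key D (P : R -> Prop) : upc D -> is_prime_ideal P ->
  (exists f, forall g, P g <-> idD D (g * f)) -> exists a, forall g, P g <-> idD D (g * 'X_[a]).
Proof.
move=> hD hP [f hf]; apply: (key_aux hD hP (leqnn (size (msupp (red D f))))).
  by move=> m /red_mem.
by move=> g; rewrite hf; apply: colon_ext => //; apply: red_diff.
Qed.


Section Weight.
Variable W : 'I_n -> nat.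
Hypothesis hW : forall i, (0 < W i)%N.

Definition divm (c : mnm) : mnm := [multinom (c i %/ W i)%N | i < n].
Definition wmul (m : mnm) : mnm := [multinom (W i * m i)%N | i < n].
Definition DW (D : mnm -> Prop) : mnm -> Prop := fun c => D (divm c).

Lemma DW_upc D : upc D -> upc (DW D).
Proof.
move=> hD m m' /mnm_lepP h; apply: hD; apply/mnm_lepP => i; rewrite !mnmE.
exact: leq_div2r.
Qed.

Lemma shift_upc D a : upc D -> upc (fun m => D (a + m)%MM).
Proof.
move=> hD m m' /mnm_lepP h; apply: hD; apply/mnm_lepP => i; rewrite !mnmDE.
by rewrite leq_add2l.
Qed.

Lemma transfer1 D (P : R -> Prop) a : upc D -> is_prime_ideal P ->
  (forall g, P g <-> idD D (g * 'X_[a])) ->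
  exists b, forall g, P g <-> idD (DW D) (g * 'X_[b]).
Proof.
move=> hD hP ha.
set E := fun m => D (a + m)%MM.
have hE : forall g, P g <-> idD E g by move=> g; rewrite ha mon_colon.
have hPM := prime_mon hP hE (shift_upc (a:=a) hD).
set e := fun i => if dec (E U_(i)%MM) then (W i).-1 else 0%N.
exists [multinom (W i * a i + e i)%N | i < n] => g.
rewrite hE mon_colon; apply: idD_ext => m.
set q : mnm := [multinom ((m i + e i) %/ W i)%N | i < n].
have -> : DW D ([multinom (W i * a i + e i)%N | i < n] + m)%MM = E q.
  rewrite /DW /E; congr D; apply/mnmP => i.
  by rewrite /divm !(mnmDE, mnmE) -addnA [(e i + _)%N]addnC mulnC (divnMDl _ _ (hW i)).
split => /hPM [i [hi hEi]]; apply/hPM; exists i; split => //.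
  rewrite /q mnmE /e; case: decP => // _; rewrite divn_gt0 //; have := hW i; lia.
move: hi; rewrite /q mnmE /e; case: decP => // _; rewrite divn_gt0 //; have := hW i; lia.
Qed.

Lemma transfer2 D (P : R -> Prop) b : upc D -> is_prime_ideal P ->
  (forall g, P g <-> idD (DW D) (g * 'X_[b])) ->
  exists a, forall g, P g <-> idD D (g * 'X_[a]).
Proof.
move=> hD hP hb.
set E := fun m => DW D (b + m)%MM.
have hE : forall g, P g <-> idD E g by move=> g; rewrite hb mon_colon.
have hPM := prime_mon hP hE (shift_upc (a:=b) (DW_upc hD)).
exists (divm b) => g; rewrite hE mon_colon; apply: idD_ext => m.
have -> : D (divm b + m)%MM = E (wmul m).
  rewrite /E /DW; congr D; apply/mnmP => i.
  by rewrite /divm /wmul !(mnmDE, mnmE) [(b i + _)%N]addnC mulnC (divnMDl _ _ (hW i)) addnC.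
split => /hPM [i [hi hEi]]; apply/hPM; exists i; split => //.
  by rewrite mnmE muln_gt0 hi hW.
by move: hi; rewrite mnmE muln_gt0 => /andP [].
Qed.

Lemma Ass_ext (J J' : R -> Prop) P : (forall p, J p <-> J' p) -> Ass J P <-> Ass J' P.
Proof.
move=> h; split => -[hP [f hf]]; split => //; exists f => g; by rewrite hf h.
Qed.

Lemma Ass_W D (P : R -> Prop) : upc D -> Ass (idD D) P <-> Ass (idD (DW D)) P.
Proof.
move=> hD; split => -[hP hf]; split => //.
  have [a ha] := key hD hP hf.
  have [b hb] := transfer1 hD hP ha.
  by exists 'X_[b].
have [b hb] := key (DW_upc hD) hP hf.
have [a ha] := transfer2 hD hP hb.
by exists 'X_[a].
Qed.

End Weight.

Fixpoint powD (D : mnm -> Prop) (k : nat) : mnm -> Prop :=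
  match k with
  | 0 => fun _ => True
  | k'.+1 => fun c => exists m1 m2, [/\ D m1, powD D k' m2 & (m1 + m2 <= c)%MM]
  end.

Lemma powD_upc D k : upc (powD D k).
Proof.
case: k => [//|k] m m' hle [m1 [m2 [h1 h2 h3]]].
by exists m1, m2; split => //; apply: lepm_trans hle.
Qed.

Lemma ideal_pow_ext (I J : R -> Prop) k p : (forall q, I q <-> J q) ->
  ideal_pow I k p <-> ideal_pow J k p.
Proof.
move=> h; apply: gen_ext => q; split => -[s [h1 [h2 h3]]]; exists s; split => //;
  split => // x /h2 /h //.
Qed.

Lemma prod_pow D (s : seq R) : (forall q, q \in s -> idD D q) ->
  idD (powD D (size s)) (\prod_(q <- s) q).
Proof.
elim: s => [|q s IH] hs.
  by rewrite big_nil -mpolyX0; apply/idDX.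
rewrite big_cons => m /msuppM_le /allpairsP [[m1 m2] /= [h1 h2 ->]].
exists m1, m2; split; last exact: lepm_refl.
  by apply: (hs q) => //; rewrite mem_head.
by apply: IH => // x hx; apply: hs; rewrite in_cons hx orbT.
Qed.

Lemma pow_mon D k c : powD D k c -> exists s r, [/\ size s = k,
  (forall q, q \in s -> idD D q) & 'X_[c] = r * \prod_(q <- s) q].
Proof.
elim: k c => [|k IH] c.
  by move=> _; exists [::], 'X_[c]; split => //; rewrite big_nil mulr1.
move=> [m1 [m2 [h1 h2 hle]]].
have [s [r [hs1 hs2 hr]]] := IH _ h2.
exists ('X_[m1] :: s), ('X_[c - (m1 + m2)] * r); split.
- by rewrite /= hs1.
- move=> q; rewrite in_cons => /orP [/eqP ->|/hs2 //]; exact/idDX.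
rewrite big_cons -[in LHS](submK hle) !mpolyXD hr -!mulrA; congr (_ * _).
exact: mulrCA.
Qed.

Lemma pow_idD D k p : upc D -> ideal_pow (idD D) k p <-> idD (powD D k) p.
Proof.
move=> hD; split.
  apply: gen_sub; first exact/idD_ideal/powD_upc.
  by move=> q [s [<- [hs ->]]]; apply: prod_pow.
move=> hp; rewrite (mpolyE p); apply: ideal_sum; first exact: gen_ideal.
move=> m /hp /pow_mon [s [r [h1 h2 ->]]].
rewrite scalerAl; apply: gen_in; exists s; split => //.
Qed.

Section Weight2.
Variable W : 'I_n -> nat.
Hypothesis hW : forall i, (0 < W i)%N.

Lemma divm_wmul m : divm W (wmul W m) = m.
Proof. by apply/mnmP => i; rewrite /divm /wmul !mnmE mulnC mulnK. Qed.

Lemma wmul_le m c : (m <= divm W c)%MM -> (wmul W m <= c)%MM.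
Proof.
move=> /mnm_lepP h; apply/mnm_lepP => i; move: (h i); rewrite /divm /wmul !mnmE.
by rewrite leq_divRL // mulnC.
Qed.

Lemma powD_DW D k c : powD (DW W D) k c <-> DW W (powD D k) c.
Proof.
elim: k c => [//|k IH] c; split.
  move=> [m1 [m2 [h1 h2 hle]]]; exists (divm W m1), (divm W m2); split => //.
    exact/IH.
  apply/mnm_lepP => i; move/mnm_lepP: hle => /(_ i); rewrite /divm !(mnmDE, mnmE) => hle.
  apply: leq_trans (leq_div2r (W i) hle); rewrite divnD //; exact: leq_addr.
move=> [x1 [x2 [h1 h2 hle]]]; exists (wmul W x1), (wmul W x2); split.
- by rewrite /DW divm_wmul.
- by apply/IH; rewrite /DW divm_wmul.
apply: lepm_trans (wmul_le hle); apply/mnm_lepP => i.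
by rewrite /wmul !(mnmDE, mnmE) mulnDr.
Qed.

Lemma mdeg_lt (m' m0 : mnm) : (m' <= m0)%MM -> m' != m0 -> (mdeg m' < mdeg m0)%N.
Proof.
move=> hle hne; have e := submK hle.
have hz : mdeg (m0 - m')%MM != 0%N.
  by rewrite mdeg_eq0; apply: contra hne => /eqP z; rewrite -e z add0m.
rewrite -e mdegD; lia.
Qed.

Lemma min_exists (I : R -> Prop) m0 : I 'X_[m0] ->
  exists m, min_mon_gen I m /\ (m <= m0)%MM.
Proof.
suff H : forall d m0, (mdeg m0 < d)%N -> I 'X_[m0] -> exists m, min_mon_gen I m /\ (m <= m0)%MM.
  by apply: (H (mdeg m0).+1).
elim=> [//|d IH] {}m0 hd hI.
case: (classic (forall m', I 'X_[m'] -> (forall i, (m' i <= m0 i)%N) -> m' = m0)) => hmin.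
  by exists m0; split; [split | apply: lepm_refl].
have [m' hm'] : exists m', ~ (I 'X_[m'] -> (forall i, (m' i <= m0 i)%N) -> m' = m0).
  by apply: NNPP => hn; apply: hmin => m'; apply: NNPP => hn'; apply: hn; exists m'.
have hI' : I 'X_[m'] by apply: NNPP => h; apply: hm' => /h.
have hle : (m' <= m0)%MM.
  apply/mnm_lepP => i; apply: NNPP => h; apply: hm' => _ hh; exfalso; apply: h; exact: hh.
have hne : m' != m0 by apply/eqP => e; apply: hm' => _ _.
have [m [hm hmm]] := IH m' (leq_trans (mdeg_lt hle hne) hd) hI'.
by exists m; split => //; apply: lepm_trans hle.
Qed.

Lemma weight_X m : weight_hom W ('X_[m] : R) = 'X_[wmul W m].
Proof.
rewrite /weight_hom comp_mpolyX [in RHS]mpolyXE_id; apply: eq_bigr => i _.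
by rewrite tnth_mktuple /wmul mnmE exprM.
Qed.

Lemma main (I : R -> Prop) : monomial_ideal I ->
  (copersistent I <-> copersistent (weighted_ideal W I)).
Proof.
move=> hI.
set DI := up (fun m => I 'X_[m]).
have hI' : forall p, I p <-> idD DI p.
  move=> p; rewrite hI -gen_mon; apply: gen_ext => q; split.
    by move=> [hq [m e]]; exists m; split => //; rewrite -e.
  by move=> [m [hm ->]]; split => //; exists m.
have hWI : forall p, weighted_ideal W I p <-> idD (DW W DI) p.
  move=> p; rewrite /weighted_ideal.
  rewrite (gen_ext _ (S' := fun q => exists c, (exists m, min_mon_gen I m /\ c = wmul W m) /\ q = 'X_[c])).
    rewrite gen_mon; apply: idD_ext => c; split.
      move=> [c0 [m [hm ->]] hle]; exists m; first by case: hm.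
      apply/mnm_lepP => i; move/mnm_lepP: hle => /(_ i); rewrite /divm /wmul !mnmE.
      by rewrite leq_divRL // mulnC.
    move=> [m0 hm0 hle]; have [m [hm hmm]] := min_exists hm0.
    exists (wmul W m); first by exists m.
    apply: wmul_le; exact: lepm_trans hle.
  move=> q; split.
    by move=> [m [hm ->]]; exists (wmul W m); split; [exists m | rewrite weight_X].
  by move=> [c [[m [hm ->]] ->]]; exists m; split => //; rewrite weight_X.
have hA : forall k P, Ass (ideal_pow I k) P <-> Ass (ideal_pow (weighted_ideal W I) k) P.
  move=> k P.
  rewrite (Ass_ext _ (J' := idD (powD DI k))); last first.
    by move=> p; rewrite (ideal_pow_ext _ _ hI') pow_idD //; apply: up_upc.
  rewrite (Ass_ext _ (J := ideal_pow (weighted_ideal W I) k) (J' := idD (DW W (powD DI k)))); last first.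
    move=> p; rewrite (ideal_pow_ext _ _ hWI) pow_idD; last by apply: DW_upc; apply: up_upc.
    by apply: idD_ext => c; apply: powD_DW.
  exact: (Ass_W hW P (@powD_upc DI k)).
split => h k hk P.
  by move=> /hA H; apply/hA; apply: h.
by move=> /hA H; apply/hA; apply: h.
Qed.

End Weight2.
End Main.

Theorem theorem3p14 (K : fieldType) (n : nat) (I : {mpoly K[n]} -> Prop)
  (W : 'I_n -> nat) :
  monomial_ideal I -> (forall i, (0 < W i)%N) ->
  (copersistent I <-> copersistent (weighted_ideal W I)).
Proof. by move=> hI hW; apply: main. Qed.
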